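(* Let $A$ be a combination matrix of the weakly-connected form described in the context, with $W=T_{SR}(I-T_{RR})^{-1}$, and let $\mathcal{A}=A\otimes I_M$ and $\mathcal{W}=W\otimes I_M$. For vectors $w_1^\star,\dots,w_S^\star\in\mathbb{R}^M$ (the Pareto solutions of the sub-networks of group $S$) let $\omega^\star=\mathrm{col}\{\mathbb{1}_{N_1}\otimes w_1^\star,\dots,\mathbb{1}_{N_S}\otimes w_S^\star\}\in\mathbb{R}^{N_{gS}M}$, $\omega^\bullet=\mathcal{W}^{\mathsf T}\omega^\star\in\mathbb{R}^{N_{gR}M}$ and $\omega_\infty=\mathrm{col}\{\omega^\star,\omega^\bullet\}\in\mathbb{R}^{NM}$. Then $\omega_\infty=\mathcal{A}^{\mathsf T}\omega_\infty$. Moreover, $\omega_\infty$ is the unique solution $x\in\mathbb{R}^{NM}$ of $x=\mathcal{A}^{\mathsf T}x$ whose first $N_{gS}M$ entries equal $\omega^\star$.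
   Context: $N$ agents are partitioned into sub-networks $1,\dots,S+R$ ($S\ge 1$), sub-network $j$ having $N_j$ agents; agents of sub-networks $1,\dots,S$ (group $S$, $N_{gS}=N_1+\cdots+N_S$ agents) come first, then those of sub-networks $S+1,\dots,S+R$ (group $R$, $N_{gR}$ agents). The combination matrix $A=[a_{\ell k}]$ is nonnegative, left-stochastic ($A^{\mathsf T}\mathbb{1}=\mathbb{1}$), and of the block form $A=\begin{bmatrix}T_{SS}&T_{SR}\\0&T_{RR}\end{bmatrix}$, where $T_{SS}=\mathrm{blockdiag}\{A_1,\dots,A_S\}$ with each $A_s\in\mathbb{R}^{N_s\times N_s}$ left-stochastic and primitive, and $T_{RR}$ is block upper triangular with diagonal blocks $A_{S+1},\dots,A_{S+R}$; each $A_r$ ($r>S$) is the nonnegative irreducible matrix of weights internal to a connected sub-network $r$ that receives information from outside it, so that at least one column of $A_r$ sums to strictly less than one. (Under these conditions $I-T_{RR}$ is invertible.) $\mathrm{col}\{\cdot\}$ denotes vertical stacking and $\otimes$ the Kronecker product. *)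

(* Defs.v *)
From HB Require Import structures.
From mathcomp Require Import all_boot all_order all_algebra.
From mathcomp Require Export mxtens.
Set Implicit Arguments. Unset Strict Implicit. Unset Printing Implicit Defensive.
Import Order.TTheory GRing.Theory Num.Theory.
Local Open Scope ring_scope.

Section Defs.
Variable R : realFieldType.

Definition nonnegmx m n (A : 'M[R]_(m, n)) := forall i j, 0 <= A i j.

Definition left_stochastic n (A : 'M[R]_n) :=
  nonnegmx A /\ A^T *m (const_mx 1 : 'cV[R]_n) = const_mx 1.

Definition mxpow n (A : 'M[R]_n) (k : nat) : 'M[R]_n := iter k (mulmx A) 1%:M.

Definition primitive n (A : 'M[R]_n) :=
  nonnegmx A /\ exists k, forall i j, 0 < mxpow A k i j.

Definition irreducible n (A : 'M[R]_n) :=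
  nonnegmx A /\ forall i j, exists k, 0 < mxpow A k i j.

(* Kronecker product (agent-major ordering: (i,j) |-> i * p + j) *)
Definition kron m n p q (A : 'M[R]_(m, n)) (B : 'M[R]_(p, q)) : 'M[R]_(m * p, n * q)
  := tensmx A B.


Lemma cast_sum_mul k (Ns : 'I_k -> nat) (M : nat) :
  (\sum_(s < k) (Ns s * M) = (\sum_(s < k) Ns s) * M)%N.
Proof. by rewrite big_distrl. Qed.

Definition omega_star k (Ns : 'I_k -> nat) (M : nat) (w : 'I_k -> 'cV[R]_M)
  : 'cV[R]_((\sum_(s < k) Ns s) * M) :=
  castmx (cast_sum_mul Ns M, erefl 1%N)
    (\mxcol_(s < k) kron (const_mx 1 : 'cV[R]_(Ns s)) (w s)).

Definition col_stack a b M (x : 'cV[R]_(a * M)) (y : 'cV[R]_(b * M))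
  : 'cV[R]_((a + b) * M) :=
  castmx (esym (mulnDl a b M), erefl 1%N) (col_mx x y).

Lemma prefix_le a b M : (a * M <= (a + b) * M)%N.
Proof. exact: leq_mul (leq_addr b a) (leqnn M). Qed.

Definition prefix_eq a b M (x : 'cV[R]_((a + b) * M)) (y : 'cV[R]_(a * M)) :=
  forall i : 'I_(a * M), x (widen_ord (prefix_le a b M) i) 0 = y i 0.

End Defs.

(* Main.v *)
Require Import Defs.
From HB Require Import structures.
From mathcomp Require Import all_boot all_order all_algebra.
Import Order.TTheory GRing.Theory Num.Theory.
Local Open Scope ring_scope.



Set Implicit Arguments. Unset Strict Implicit. Unset Printing Implicit Defensive.
Section Aux.
Variable R : realFieldType.

Definition unv n M (x : 'cV[R]_(n * M)) : 'M[R]_(n, M) :=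
  \matrix_(i, a) x (mxtens_index (i, a)) 0.

Lemma unv_inj n M : injective (@unv n M).
Proof.
move=> x y /matrixP E; apply/matrixP => k j; rewrite [j]ord1.
case: (mxtens_indexP k) => i a; have := E i a; rewrite !mxE //.
Qed.

Lemma unv_kron n m M (P : 'M[R]_(n, m)) (x : 'cV[R]_(n * M)) :
  unv ((kron P (1%:M : 'M_M))^T *m x) = P^T *m unv x.
Proof.
apply/matrixP => j a; rewrite !mxE.
rewrite (reindex (@mxtens_index n M)) /=; last first.
  by exists (@mxtens_unindex n M) => k _; [apply: mxtens_indexK | apply: mxtens_unindexK].
rewrite (eq_bigr (fun p : 'I_n * 'I_M => (kron P 1%:M)^T (mxtens_index (j, a)) (mxtens_index (p.1, p.2)) * x (mxtens_index (p.1, p.2)) 0)); last by case.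
rewrite -(pair_bigA _ (fun i b => (kron P 1%:M)^T (mxtens_index (j, a)) (mxtens_index (i, b)) * x (mxtens_index (i, b)) 0)) /=.
apply: eq_bigr => i _; rewrite (bigD1 a) //= big1 ?addr0.
  by rewrite !mxE !mxtens_indexK /= eqxx mulr1.
by move=> b nba; rewrite !mxE !mxtens_indexK /= (negbTE nba) mulr0 mul0r.
Qed.

Lemma unv_col_stack a b M (x : 'cV[R]_(a * M)) (y : 'cV[R]_(b * M)) :
  unv (col_stack x y) = col_mx (unv x) (unv y).
Proof.
apply/matrixP => i c; rewrite mxE castmxE /=.
case: (split_ordP i) => k ->.
- rewrite (col_mxEu (unv x)) [RHS]mxE.
  have -> : cast_ord (esym (esym (mulnDl a b M))) (mxtens_index (lshift b k, c))
     = lshift (b * M) (mxtens_index (k, c)) by apply: val_inj.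
  by rewrite col_mxEu cast_ord_id.
- rewrite (col_mxEd (unv x)) [RHS]mxE.
  have -> : cast_ord (esym (esym (mulnDl a b M))) (mxtens_index (rshift a k, c))
     = rshift (a * M) (mxtens_index (k, c)).
    by apply: val_inj => /=; rewrite mulnDl addnA.
  by rewrite col_mxEd cast_ord_id.
Qed.

Lemma prefix_col_stack a b M (x : 'cV[R]_(a * M)) (y : 'cV[R]_(b * M)) :
  prefix_eq (col_stack x y) x.
Proof.
move=> i; rewrite castmxE /=.
have -> : cast_ord (esym (esym (mulnDl a b M))) (widen_ord (prefix_le a b M) i)
     = lshift (b * M) i by apply: val_inj.
by rewrite cast_ord_id col_mxEu.
Qed.

Lemma col_stack_surj a b M (z : 'cV[R]_((a + b) * M)) :
  exists u d, z = col_stack u d.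
Proof.
set z' := castmx (mulnDl a b M, erefl 1%N) z.
exists (usubmx z'), (dsubmx z'); rewrite /col_stack vsubmxK /z'.
by rewrite castmx_comp castmx_id.
Qed.

Lemma prefix_col_stack_eq a b M (u s : 'cV[R]_(a * M)) (d : 'cV[R]_(b * M)) :
  prefix_eq (col_stack u d) s -> u = s.
Proof.
move=> H; apply/matrixP => i j; rewrite [j]ord1 -H.
by rewrite prefix_col_stack.
Qed.

Lemma mxcol_Rank k (p_ : 'I_k -> nat) n (V : forall i, 'M[R]_(p_ i, n)) s (j : 'I_(p_ s)) c :
  (\mxcol_i V i) (tagnat.Rank s j) c = V s j c.
Proof.
by have := congr1 (fun X : 'M[R]_(p_ s, n) => X j c) (mxcolK V s); rewrite !mxE.
Qed.

Lemma mxblock_Rank k (p_ : 'I_k -> nat) (V : forall i j, 'M[R]_(p_ i, p_ j)) s t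
   (j : 'I_(p_ s)) (l : 'I_(p_ t)) :
  (\mxblock_(i, j) V i j) (tagnat.Rank s j) (tagnat.Rank t l) = V s t j l.
Proof.
by have := congr1 (fun X : 'M[R]_(p_ s, p_ t) => X j l) (mxblockK V s t); rewrite !mxE.
Qed.

Lemma sum_Rank n (p_ : 'I_n -> nat) (F : 'I_(\sum_i p_ i) -> R) :
  \sum_p F p = \sum_s \sum_(j < p_ s) F (tagnat.Rank s j).
Proof.
rewrite sig_big_dep /= (reindex (@tagnat.rank n p_)) /=; last first.
  by exists tagnat.sig => x _; [apply: tagnat.rankK | apply: tagnat.sigK].
by apply: eq_bigr => -[s j] _.
Qed.

Lemma unv_omega_star k (Ns : 'I_k -> nat) M (w : 'I_k -> 'cV[R]_M) :
  unv (omega_star Ns w) = \mxcol_s (const_mx 1 *m (w s)^T : 'M_(Ns s, M)).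
Proof.
apply/matrixP => i c; rewrite -[i]tagnat.sig2K.
move: (tagnat.sig1 i) (tagnat.sig2 i) => s j.
rewrite mxcol_Rank mxE castmxE /=.
have -> : cast_ord (esym (cast_sum_mul Ns M)) (mxtens_index (tagnat.Rank s j, c))
   = @tagnat.Rank k (fun s => (Ns s * M)%N) s (mxtens_index (j, c)).
  apply: val_inj.
  change (tagnat.Rank s j * M + c = @tagnat.Rank k (fun s => (Ns s * M)%N) s (mxtens_index (j, c)) :> nat)%N.
  by rewrite !tagnat.RankEsum /= mulnDl big_distrl /= addnA.
rewrite (ord1 (cast_ord _ _)) (mxcol_Rank (fun s0 => kron (const_mx 1 : 'cV[R]_(Ns s0)) (w s0))).
have -> : (0 : 'I_1) = mxtens_index (0 : 'I_1, 0 : 'I_1) by apply: val_inj.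
by rewrite !mxE !mxtens_indexK /= big_ord1 !mxE mul1r.
Qed.


Lemma path_lemma n (Bm : 'M[R]_n) (inS : pred 'I_n) :
  nonnegmx Bm ->
  (forall i l, inS l -> 0 < Bm i l -> inS i) ->
  forall k i j, inS j -> 0 < mxpow Bm k i j -> inS i.
Proof.
move=> nnB clo; elim=> [|k IH] i j Sj.
  by rewrite /mxpow /= mxE; case: eqP => [->|]; rewrite ?ltxx.
rewrite /mxpow /= -/(mxpow Bm k) mxE => pos.
have [l _ Hl] : exists2 l, true & 0 < Bm i l * mxpow Bm k l j.
  apply/exists_inP; apply: contraLR pos; rewrite negb_exists_in => /forall_inP H.
  rewrite -leNgt; apply: sumr_le0 => l _; rewrite leNgt; exact: H.
have Bpos : 0 < Bm i l.
  by rewrite lt0r nnB andbT; apply: contraTneq Hl => ->; rewrite mul0r ltxx.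
have Ppos : 0 < mxpow Bm k l j by rewrite -(pmulr_rgt0 _ Bpos).
exact: clo i l (IH l j Sj Ppos) Bpos.
Qed.

Lemma inv_lemma Rn (NR : 'I_Rn -> nat) (B : forall i j : 'I_Rn, 'M[R]_(NR i, NR j)) :
  (forall i j, nonnegmx (B i j)) ->
  (forall i j : 'I_Rn, (j < i)%N -> B i j = 0) ->
  (forall r, irreducible (B r r)) ->
  (forall r, exists k, \sum_i B r r i k < 1) ->
  (forall q, \sum_p (\mxblock_(i, j) B i j) p q <= 1) ->
  (1%:M - \mxblock_(i, j) B i j) \in unitmx.
Proof.
move=> nnB Blow irrB colB colT.
set T := \mxblock_(i, j) B i j.
have nnT : forall p q, 0 <= T p q.
  move=> p q; rewrite /T mxE; exact: nnB.
rewrite unitmxE unitfE; apply/negP => /det0P [v vnz vU].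
have fix1 : forall q, v 0 q = \sum_p v 0 p * T p q.
  move=> q; move/matrixP: vU => /(_ 0 q); rewrite mulmxBr mulmx1 !mxE.
  by move/eqP; rewrite subr_eq0 => /eqP ->.
have [p0 vp0] : exists p0, v 0 p0 != 0.
  apply/existsP; apply: contraNT vnz; rewrite negb_exists => /forallP H.
  apply/eqP/matrixP => i q; rewrite [i]ord1 mxE; exact/eqP/negbNE/H.
case: (@arg_maxP _ _ _ p0 xpredT (fun p => `|v 0 p|) isT) => pm _ pmax.
set m := `|v 0 pm|.
have mpos : 0 < m.
  by apply: lt_le_trans (pmax p0 isT); rewrite normr_gt0.
pose inS := fun p => `|v 0 p| == m.
have clo : forall q, inS q -> (\sum_p T p q = 1) /\ (forall p, 0 < T p q -> inS p).
  move=> q /eqP Sq.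
  have le1 : m <= \sum_p `|v 0 p| * T p q.
    rewrite -Sq fix1; apply: le_trans (ler_norm_sum _ _ _) _.
    by apply: ler_sum => p _; rewrite normrM (ger0_norm (nnT p q)).
  have H0 : \sum_p T p q * (m - `|v 0 p|) = 0.
    apply/eqP; rewrite eq_le; apply/andP; split; last first.
      by apply: sumr_ge0 => p _; apply: mulr_ge0 => //; rewrite subr_ge0; exact: (pmax p isT).
    have -> : \sum_p T p q * (m - `|v 0 p|) = m * \sum_p T p q - \sum_p `|v 0 p| * T p q.
      rewrite mulr_sumr -sumrB; apply: eq_bigr => p _.
      by rewrite mulrBr (mulrC m) (mulrC `|v 0 p|).
    rewrite subr_le0; apply: le_trans le1.
    by rewrite -[leRHS]mulr1 ler_pM2l.
  have Fge : forall p, 0 <= T p q * (m - `|v 0 p|).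
    by move=> p; apply: mulr_ge0 => //; rewrite subr_ge0; exact: (pmax p isT).
  have Hp : forall p, T p q * (m - `|v 0 p|) = 0.
    by move=> p; apply: (psumr_eq0P (fun p _ => Fge p) H0).
  split.
    apply/eqP; rewrite eq_le colT /=.
    have : m <= m * \sum_p T p q.
      apply: (le_trans le1); rewrite mulr_sumr le_eqVlt; apply/orP; left; apply/eqP.
      apply: eq_bigr => p _; have := Hp p; rewrite mulrBr => /eqP; rewrite subr_eq0 => /eqP E.
      by rewrite mulrC -E mulrC.
    by rewrite -{1}[m]mulr1 ler_pM2l.
  move=> p Tpos; have /eqP := Hp p.
  by rewrite mulf_eq0 (gt_eqF Tpos) /= subr_eq0 eq_sym.
pose P n := [exists q, inS q && (tagnat.sig1 q == n :> nat)].
have exP : exists n, P n.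
  by exists (tagnat.sig1 pm); apply/existsP; exists pm; rewrite /inS !eqxx.
case: (ex_minnP exP) => r0 /existsP [q0 /andP [Sq0 /eqP e0]] minr.
have minS : forall q, inS q -> (tagnat.sig1 q0 <= tagnat.sig1 q)%N.
  by move=> q Sq; rewrite e0; apply: minr; apply/existsP; exists q; rewrite Sq eqxx.
set r := tagnat.sig1 q0.
have allS : forall i : 'I_(NR r), inS (tagnat.Rank r i).
  move=> i; case: (irrB r) => nnBr /(_ i (tagnat.sig2 q0)) [k Hk].
  have := @path_lemma _ (B r r) [pred i | inS (tagnat.Rank r i)] nnBr _ k i (tagnat.sig2 q0) _ Hk.
  apply.
    move=> i' l Sl Bpos; apply: (clo _ Sl).2; by rewrite /T mxblock_Rank.
  by rewrite /= tagnat.sig2K.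
case: (colB r) => c Hc.
have [Hsum Hclo] := clo _ (allS c).
have zero_out : forall p, tagnat.sig1 p != r -> T p (tagnat.Rank r c) = 0.
  move=> p np; apply/eqP; apply: contraNT np => Tnz.
  have Tpos : 0 < T p (tagnat.Rank r c) by rewrite lt0r Tnz nnT.
  have le1 := minS p (Hclo p Tpos).
  apply/eqP/val_inj/eqP; rewrite eqn_leq le1 andbT leqNgt; apply/negP => lt.
  by move: Tnz; rewrite -[p]tagnat.sig2K /T mxblock_Rank (Blow _ _ lt) mxE eqxx.
have : \sum_p T p (tagnat.Rank r c) = \sum_i B r r i c.
  rewrite sum_Rank (bigD1 r) //= [X in _ + X]big1 ?addr0.
    by apply: eq_bigr => i _; rewrite /T mxblock_Rank.
  move=> s ns; apply: big1 => i _; apply: zero_out; by rewrite tagnat.Rank1K.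
by rewrite Hsum => E; move: Hc; rewrite -E ltxx.
Qed.

End Aux.

Theorem lemma2 (R : realFieldType) (M Sn Rn : nat)
  (NS : 'I_Sn -> nat) (NR : 'I_Rn -> nat)
  (As : forall s : 'I_Sn, 'M[R]_(NS s))
  (TSR : 'M[R]_(\sum_(s < Sn) NS s, \sum_(r < Rn) NR r))
  (B : forall i j : 'I_Rn, 'M[R]_(NR i, NR j))
  (w : 'I_Sn -> 'cV[R]_M) :
  (0 < Sn)%N ->
  (forall s, 0 < NS s)%N ->
  (forall r, 0 < NR r)%N ->
  (forall s, left_stochastic (As s)) ->
  (forall s, primitive (As s)) ->
  nonnegmx TSR ->
  (forall i j, nonnegmx (B i j)) ->
  (forall i j : 'I_Rn, (j < i)%N -> B i j = 0) ->
  (forall r, irreducible (B r r)) ->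
  (forall r, exists k, \sum_i B r r i k < 1) ->
  let TSS := \mxdiag_(s < Sn) As s in
  let TRR := \mxblock_(i < Rn, j < Rn) B i j in
  let A := block_mx TSS TSR 0 TRR in
  left_stochastic A ->
  let W := TSR *m invmx (1%:M - TRR) in
  let calA := kron A (1%:M : 'M[R]_M) in
  let calW := kron W (1%:M : 'M[R]_M) in
  let om_star := omega_star NS w in
  let om_bullet := calW^T *m om_star in
  let om_inf := col_stack om_star om_bullet in
  om_inf = calA^T *m om_inf /\
  prefix_eq om_inf om_star /\
  (forall x : 'cV[R]_((\sum_(s < Sn) NS s + \sum_(r < Rn) NR r) * M),
     x = calA^T *m x -> prefix_eq x om_star -> x = om_inf).

Proof.
move=> Sp NSp NRp lsA primA nnTSR nnB Blow irrB colB TSS TRR A lsAA W calA calW om_star om_bullet om_inf.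
have colTRR : forall q, \sum_p TRR p q <= 1.
  move=> q; case: lsAA => _ /matrixP /(_ (rshift _ q) 0).
  rewrite mxE big_split_ord /= => E.
  rewrite (eq_bigr (fun i => TSR i q)) in E; last first.
    by move=> i _; rewrite [A^T _ _]mxE /A block_mxEur [const_mx _ _ _]mxE mulr1.
  rewrite (eq_bigr (fun i => TRR i q)) in E; last first.
    by move=> i _; rewrite [A^T _ _]mxE /A block_mxEdr [const_mx _ _ _]mxE mulr1.
  rewrite mxE in E; rewrite -E lerDr; apply: sumr_ge0 => i _; exact: nnTSR.
have Uu : (1%:M - TRR) \in unitmx := inv_lemma nnB Blow irrB colB colTRR.
set Om := unv om_star.
have HS : TSS^T *m Om = Om.
  rewrite /Om /om_star unv_omega_star /TSS tr_mxdiag mul_mxdiag_mxcol; apply: eq_mxcol => s.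
  by rewrite mulmxA (proj2 (lsA s)).
have HB : unv om_bullet = W^T *m Om by rewrite /om_bullet /calW unv_kron.
have key : forall X Y, unv (calA^T *m col_stack X Y) =
    col_mx (TSS^T *m unv X) (TSR^T *m unv X + TRR^T *m unv Y).
  move=> X Y; rewrite /calA unv_kron unv_col_stack /A tr_block_mx trmx0 mul_block_col.
  by rewrite mul0mx addr0.
have solve : forall Y, (Y = TSR^T *m Om + TRR^T *m Y) <-> Y = W^T *m Om.
  move=> Y; have UTu : (1%:M - TRR)^T \in unitmx by rewrite unitmx_tr.
  have WT : W^T = invmx ((1%:M - TRR)^T) *m TSR^T by rewrite /W trmx_mul trmx_inv.
  have E : (Y = TSR^T *m Om + TRR^T *m Y) <-> ((1%:M - TRR)^T *m Y = TSR^T *m Om).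
    rewrite linearB /= trmx1 mulmxBl mul1mx; split => [H|H].
      by rewrite {1}H addrK.
    by rewrite -H subrK.
  apply: (iff_trans E); rewrite WT -mulmxA; split => [H|->]; first by rewrite -H mulKmx.
  by rewrite mulKVmx.
split.
  apply: unv_inj; rewrite /om_inf unv_col_stack key -/Om HS HB.
  by congr col_mx; apply/solve.
split; first exact: prefix_col_stack.
move=> x Hx Hp.
case: (col_stack_surj x) => u [d xE]; rewrite xE in Hx Hp *.
have eu := prefix_col_stack_eq Hp; rewrite eu in Hx *.
have := congr1 (@unv _ _ _) Hx; rewrite key unv_col_stack -/Om HS => /eq_col_mx [_ Hd].
have : unv d = unv om_bullet by rewrite HB; apply/solve.
by move/unv_inj ->.
Qed.
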